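(* Let $(V,\{\nu_n\})$ be an $L^\infty$-MOS and $S\subseteq V$ a subspace. Then $S$ is the kernel of a completely gauge-bounded linear map $\phi:V\to W$ into some $L^\infty$-MOS $(W,\{\omega_n\})$ if and only if $S$ is an $L^\infty$-MOS ideal of $V$. In the latter case the quotient map $\pi:V\to V/S$ is completely gauge-contractive with respect to the quotient gauges $q_n(A+M_n(S)_{sa})=\inf\{\nu_n(B):B\in A+M_n(S)_{sa}\}$, and $\ker\pi=S$.
   Context: An $L^\infty$-MOS is a complex $*$-vector space $V$ ($M_n(V)$ with $(x_{ij})^*=(x_{ji}^* )$, self-adjoint part $M_n(V)_{sa}$) with proper gauges $\nu_n:M_n(V)_{sa}\to[0,\infty)$ (subadditive, positively homogeneous, $\nu_n(A)=\nu_n(-A)=0\Rightarrow A=0$) such that $\nu_k(X^*AX)\le\|X\|^2\nu_n(A)$ for scalar $X\in M_{n,k}$ and $\nu_{n+k}(A\oplus B)=\max\{\nu_n(A),\nu_k(B)\}$. A linear map $\phi:(V,\{\nu_n\})\to(W,\{\omega_n\})$ is completely gauge-bounded if $\phi(x^* )=\phi(x)^*$ and there is $C>0$ with $\omega_n(\phi^{(n)}(A))\le C\nu_n(A)$ for all $n$, $A\in M_n(V)_{sa}$; completely gauge-contractive if $C=1$ works. For a gauged real vector space $(E,\nu)$, a subspace $T$ is a gauge ideal if whenever $x\in E$ and sequences $(a_j),(b_j)\subseteq T$ satisfy $\nu(x-a_j)\to0$ and $\nu(b_j-x)\to0$, then $x\in T$. A self-adjoint subspace $S\subseteq V$ is an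 $L^\infty$-MOS ideal if $S\cap V_{sa}$ is a gauge ideal of $(V_{sa},\nu_1)$. $V/S$ has involution $(x+S)^*=x^*+S$ and $M_n(V/S)_{sa}$ is identified with $M_n(V)_{sa}/M_n(S)_{sa}$. *)

(* Defs.v *)
From mathcomp Require Import ssreflect ssrfun ssrbool eqtype ssrnat seq fintype bigop.
From Stdlib Require Import Reals ClassicalEpsilon.

Set Implicit Arguments.
Unset Strict Implicit.

Local Open Scope R_scope.

Record Cx := Cmk { Cre : R; Cim : R }.
Definition C0 : Cx := Cmk 0 0.
Definition C1 : Cx := Cmk 1 0.
Definition RtoC (r : R) : Cx := Cmk r 0.
Definition Cadd (a b : Cx) : Cx := Cmk (Cre a + Cre b) (Cim a + Cim b).
Definition Cmul (a b : Cx) : Cx :=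
  Cmk (Cre a * Cre b - Cim a * Cim b) (Cre a * Cim b + Cim a * Cre b).
Definition Cconj (a : Cx) : Cx := Cmk (Cre a) (- Cim a).
Definition Cnorm2 (a : Cx) : R := Cre a * Cre a + Cim a * Cim a.

Record StarOps := {
  car :> Type;
  vzero : car;
  vadd : car -> car -> car;
  vopp : car -> car;
  vscal : Cx -> car -> car;
  vstar : car -> car }.
Arguments vzero {s}.
Arguments vadd {s}.
Arguments vopp {s}.
Arguments vscal {s}.
Arguments vstar {s}.

Definition vsub {V : StarOps} (x y : V) : V := vadd x (vopp y).

Definition is_star_vspace (V : StarOps) : Prop :=
  (forall x y z : V, vadd x (vadd y z) = vadd (vadd x y) z) /\
  (forall x y : V, vadd x y = vadd y x) /\
  (forall x : V, vadd vzero x = x) /\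
  (forall x : V, vadd (vopp x) x = vzero) /\
  (forall x : V, vscal C1 x = x) /\
  (forall (a b : Cx) (x : V), vscal a (vscal b x) = vscal (Cmul a b) x) /\
  (forall (a : Cx) (x y : V), vscal a (vadd x y) = vadd (vscal a x) (vscal a y)) /\
  (forall (a b : Cx) (x : V), vscal (Cadd a b) x = vadd (vscal a x) (vscal b x)) /\
  (forall x y : V, vstar (vadd x y) = vadd (vstar x) (vstar y)) /\
  (forall (a : Cx) (x : V), vstar (vscal a x) = vscal (Cconj a) (vstar x)) /\
  (forall x : V, vstar (vstar x) = x).

Definition is_subspace (V : StarOps) (S : V -> Prop) : Prop :=
  S vzero /\ (forall x y, S x -> S y -> S (vadd x y)) /\
  (forall (a : Cx) x, S x -> S (vscal a x)).

Definition Mat (V : Type) (n m : nat) := 'I_n -> 'I_m -> V.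

Definition mzero {V : StarOps} n m : Mat V n m := fun _ _ => vzero.
Definition madd {V : StarOps} n m (A B : Mat V n m) : Mat V n m :=
  fun i j => vadd (A i j) (B i j).
Definition mopp {V : StarOps} n m (A : Mat V n m) : Mat V n m :=
  fun i j => vopp (A i j).
Definition mrscal {V : StarOps} n m (t : R) (A : Mat V n m) : Mat V n m :=
  fun i j => vscal (RtoC t) (A i j).
Definition mstar {V : StarOps} n m (A : Mat V n m) : Mat V m n :=
  fun i j => vstar (A j i).
Definition selfadj {V : StarOps} n (A : Mat V n n) : Prop :=
  forall i j, A i j = vstar (A j i).

(* X^* A X for a scalar matrix X in M_{n,k}(C) and A in M_n(V) *)
Definition compress {V : StarOps} n k (X : 'I_n -> 'I_k -> Cx) (A : Mat V n n)
  : Mat V k k :=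
  fun p q => \big[vadd/vzero]_(i < n) \big[vadd/vzero]_(j < n)
               vscal (Cmul (Cconj (X i p)) (X j q)) (A i j).

Definition dsum {V : StarOps} n k (A : Mat V n n) (B : Mat V k k)
  : Mat V (n + k)%nat (n + k)%nat :=
  fun i j => match fintype.split i, fintype.split j with
             | inl a, inl b => A a b
             | inr a, inr b => B a b
             | _, _ => vzero
             end.

Definition cvnorm2 k (v : 'I_k -> Cx) : R := \big[Rplus/0]_(j < k) Cnorm2 (v j).
Definition cmatvec n k (X : 'I_n -> 'I_k -> Cx) (v : 'I_k -> Cx) : 'I_n -> Cx :=
  fun i => \big[Cadd/C0]_(j < k) Cmul (X i j) (v j).
Definition opnorm n k (X : 'I_n -> 'I_k -> Cx) : R :=
  epsilon (inhabits 0)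
    (is_lub (fun t => exists v, cvnorm2 v <= 1 /\ t = sqrt (cvnorm2 (cmatvec X v)))).

(* a proper gauge on the real vector space M_n(V)_sa (values off M_n(V)_sa irrelevant) *)
Definition is_proper_gauge {V : StarOps} n (g : Mat V n n -> R) : Prop :=
  (forall A, selfadj A -> 0 <= g A) /\
  (forall A B, selfadj A -> selfadj B -> g (madd A B) <= g A + g B) /\
  (forall t A, selfadj A -> 0 < t -> g (mrscal t A) = t * g A) /\
  (forall A, selfadj A -> g A = 0 -> g (mopp A) = 0 -> A = (fun _ _ => vzero)).

Definition is_LinfMOS (V : StarOps) (nu : forall n, Mat V n n -> R) : Prop :=
  is_star_vspace V /\
  (forall n, is_proper_gauge (nu n)) /\
  (forall n k (X : 'I_n -> 'I_k -> Cx) (A : Mat V n n), selfadj A ->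
     nu k (compress X A) <= (opnorm X) ^ 2 * nu n A) /\
  (forall n k (A : Mat V n n) (B : Mat V k k), selfadj A -> selfadj B ->
     nu (n + k)%nat (dsum A B) = Rmax (nu n A) (nu k B)).

Definition mapn {V W : StarOps} (phi : V -> W) n m (A : Mat V n m) : Mat W n m :=
  fun i j => phi (A i j).

Definition is_linear_star {V W : StarOps} (phi : V -> W) : Prop :=
  (forall x y, phi (vadd x y) = vadd (phi x) (phi y)) /\
  (forall a x, phi (vscal a x) = vscal a (phi x)) /\
  (forall x, phi (vstar x) = vstar (phi x)).

Definition comp_gauge_bounded (V : StarOps) (nu : forall n, Mat V n n -> R)
  (W : StarOps) (om : forall n, Mat W n n -> R) (phi : V -> W) : Prop :=
  is_linear_star phi /\
  exists C, 0 < C /\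
    forall n (A : Mat V n n), selfadj A -> om n (mapn phi A) <= C * nu n A.

Definition comp_gauge_contractive (V : StarOps) (nu : forall n, Mat V n n -> R)
  (W : StarOps) (om : forall n, Mat W n n -> R) (phi : V -> W) : Prop :=
  is_linear_star phi /\
  forall n (A : Mat V n n), selfadj A -> om n (mapn phi A) <= nu n A.

Definition is_gauge_ideal {V : StarOps} (E : V -> Prop) (g : V -> R) (T : V -> Prop)
  : Prop :=
  forall x, E x -> forall a b : nat -> V,
    (forall j, T (a j)) -> (forall j, T (b j)) ->
    Un_cv (fun j => g (vsub x (a j))) 0 ->
    Un_cv (fun j => g (vsub (b j) x)) 0 -> T x.

Definition Vsa {V : StarOps} (x : V) : Prop := x = vstar x.

Definition nu1 {V : StarOps} (nu : forall n, Mat V n n -> R) (x : V) : R :=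
  nu 1%nat (fun _ _ => x).

Definition is_MOS_ideal (V : StarOps) (nu : forall n, Mat V n n -> R) (S : V -> Prop)
  : Prop :=
  is_subspace S /\ (forall x, S x -> S (vstar x)) /\
  is_gauge_ideal Vsa (nu1 nu) (fun x => S x /\ Vsa x).

Definition coset {V : StarOps} (S : V -> Prop) (x : V) : V -> Prop :=
  fun y => S (vsub x y).
Definition Qcar {V : StarOps} (S : V -> Prop) : Type :=
  { P : V -> Prop | exists x, P = coset S x }.
Definition cls {V : StarOps} (S : V -> Prop) (x : V) : Qcar S :=
  exist _ (coset S x) (ex_intro _ x erefl).
Definition rep {V : StarOps} (S : V -> Prop) (p : Qcar S) : V :=
  proj1_sig (constructive_indefinite_description _ (proj2_sig p)).

Definition QuotOps (V : StarOps) (S : V -> Prop) : StarOps := {|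
  car := Qcar S;
  vzero := cls S vzero;
  vadd := fun p q => cls S (vadd (rep p) (rep q));
  vopp := fun p => cls S (vopp (rep p));
  vscal := fun a p => cls S (vscal a (rep p));
  vstar := fun p => cls S (vstar (rep p)) |}.

Arguments QuotOps : clear implicits.

Definition quotmap (V : StarOps) (S : V -> Prop) : V -> QuotOps V S := cls S.

Definition is_glb (E : R -> Prop) (r : R) : Prop :=
  (forall t, E t -> r <= t) /\ (forall s, (forall t, E t -> s <= t) -> s <= r).

(* q_n(A + M_n(S)_sa) = inf { nu_n(B) : B in A + M_n(S)_sa }, where a self-adjoint
   matrix over V/S is identified with the class of its self-adjoint lifts *)
Definition qgauge (V : StarOps) (nu : forall n, Mat V n n -> R) (S : V -> Prop)
  n (A : Mat (QuotOps V S) n n) : R :=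
  epsilon (inhabits 0)
    (is_glb (fun r => exists B : Mat V n n,
                selfadj B /\ mapn (quotmap S) B = A /\ r = nu n B)).

Arguments is_LinfMOS : clear implicits.
Arguments comp_gauge_bounded : clear implicits.
Arguments comp_gauge_contractive : clear implicits.
Arguments is_MOS_ideal : clear implicits.
Arguments is_subspace : clear implicits.
Arguments qgauge : clear implicits.
Arguments quotmap : clear implicits.

(* Main.v *)
Set Warnings "-notation-overridden -redundant-canonical-projection".
From HB Require Import structures.
Require Import Defs.
From mathcomp Require Import ssreflect ssrfun ssrbool eqtype ssrnat seq fintype bigop.
From Stdlib Require Import Reals ClassicalEpsilon Lra Classical FunctionalExtensionality PropExtensionality ProofIrrelevance Lia.
Set Warnings "-notation-overridden -redundant-canonical-projection".
Open Scope R_scope.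
Set Implicit Arguments.


Lemma Ceq (a b : Cx) : Cre a = Cre b -> Cim a = Cim b -> a = b.
Proof. by case: a => ? ?; case: b => ? ? /= -> ->. Qed.

Ltac cx := apply: Ceq; rewrite /= ; lra.

Lemma CmulC a b : Cmul a b = Cmul b a.
Proof. apply: Ceq; rewrite /=; ring. Qed.

Lemma CaddA : associative Cadd. Proof. move=> a b c; cx. Qed.
Lemma CaddC : commutative Cadd. Proof. move=> a b; cx. Qed.
Lemma Cadd0 : left_id Defs.C0 Cadd. Proof. move=> a; cx. Qed.
HB.instance Definition _ := Monoid.isComLaw.Build Cx Defs.C0 Cadd CaddA CaddC Cadd0.
Lemma RaddA : associative Rplus. Proof. move=> a b c; lra. Qed.
Lemma RaddC : commutative Rplus. Proof. move=> a b; lra. Qed.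
Lemma Radd0 : left_id 0 Rplus. Proof. move=> a; lra. Qed.
HB.instance Definition _ := Monoid.isComLaw.Build R 0 Rplus RaddA RaddC Radd0.

Definition emb N n (f : 'I_n -> 'I_N) : 'I_N -> 'I_n -> Cx :=
  fun i p => if i == f p then Defs.C1 else Defs.C0.

Lemma Cmul0l b : Cmul Defs.C0 b = Defs.C0. Proof. cx. Qed.
Lemma Cmul0r b : Cmul b Defs.C0 = Defs.C0. Proof. cx. Qed.
Lemma Cconj0 : Cconj Defs.C0 = Defs.C0. Proof. cx. Qed.
Lemma Cmul11 : Cmul (Cconj Defs.C1) Defs.C1 = Defs.C1. Proof. cx. Qed.


Section VS.
Variable W : StarOps.
Hypothesis HW : is_star_vspace W.

Lemma addA (x y z : W) : vadd x (vadd y z) = vadd (vadd x y) z.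
Proof. by case: HW => ->. Qed.
Lemma addC (x y : W) : vadd x y = vadd y x.
Proof. by case: HW => _ [->]. Qed.
Lemma add0 (x : W) : vadd vzero x = x.
Proof. by case: HW => _ [_ [->]]. Qed.
Lemma addNl (x : W) : vadd (vopp x) x = vzero.
Proof. by case: HW => _ [_ [_ [->]]]. Qed.
Lemma scal1 (x : W) : vscal Defs.C1 x = x.
Proof. by case: HW => _ [_ [_ [_ [->]]]]. Qed.
Lemma scalM a b (x : W) : vscal a (vscal b x) = vscal (Cmul a b) x.
Proof. by case: HW => _ [_ [_ [_ [_ [->]]]]]. Qed.
Lemma scalDr a (x y : W) : vscal a (vadd x y) = vadd (vscal a x) (vscal a y).
Proof. by case: HW => _ [_ [_ [_ [_ [_ [->]]]]]]. Qed.
Lemma scalDl a b (x : W) : vscal (Cadd a b) x = vadd (vscal a x) (vscal b x).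
Proof. by case: HW => _ [_ [_ [_ [_ [_ [_ [->]]]]]]]. Qed.
Lemma starD (x y : W) : vstar (vadd x y) = vadd (vstar x) (vstar y).
Proof. by case: HW => _ [_ [_ [_ [_ [_ [_ [_ [->]]]]]]]]. Qed.
Lemma starZ a (x : W) : vstar (vscal a x) = vscal (Cconj a) (vstar x).
Proof. by case: HW => _ [_ [_ [_ [_ [_ [_ [_ [_ [->]]]]]]]]]. Qed.
Lemma starK (x : W) : vstar (vstar x) = x.
Proof. by case: HW => _ [_ [_ [_ [_ [_ [_ [_ [_ [_ ->]]]]]]]]]. Qed.

Lemma addr0 (x : W) : vadd x vzero = x.
Proof. by rewrite addC add0. Qed.
Lemma addNr (x : W) : vadd x (vopp x) = vzero.
Proof. by rewrite addC addNl. Qed.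
Lemma addKl (x y : W) : vadd (vopp x) (vadd x y) = y.
Proof. by rewrite addA addNl add0. Qed.
Lemma addcl (x y z : W) : vadd x y = vadd x z -> y = z.
Proof. move=> h; by rewrite -(addKl x y) h addKl. Qed.
Lemma oppU (x y : W) : vadd y x = vzero -> y = vopp x.
Proof. move=> h; by rewrite -(addr0 y) -(addNr x) addA h add0. Qed.
Lemma scal0 (x : W) : vscal Defs.C0 x = vzero.
Proof.
apply: (@addcl (vscal Defs.C0 x)); rewrite addr0 -scalDl.
have -> : Cadd Defs.C0 Defs.C0 = Defs.C0 by cx.
done.
Qed.
Lemma scalz a : vscal a (@vzero W) = vzero.
Proof.
apply: (@addcl (vscal a vzero)); rewrite addr0 -scalDr add0 //.
Qed.
Lemma oppE (x : W) : vopp x = vscal (RtoC (-1)) x.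
Proof.
symmetry; apply: oppU. rewrite -{2}(scal1 x) -scalDl -(scal0 x); congr vscal; cx.
Qed.
Lemma oppK (x : W) : vopp (vopp x) = x.
Proof. symmetry; apply: oppU; by rewrite addNr. Qed.
Lemma opp0 : vopp (@vzero W) = vzero.
Proof. by rewrite oppE scalz. Qed.
Lemma oppD (x y : W) : vopp (vadd x y) = vadd (vopp x) (vopp y).
Proof. by rewrite !oppE scalDr. Qed.
Lemma scalN a (x : W) : vscal a (vopp x) = vopp (vscal a x).
Proof. by rewrite !oppE !scalM CmulC. Qed.
Lemma star0 : vstar (@vzero W) = vzero.
Proof. rewrite -{1}(scal0 vzero) starZ.
have -> : Cconj Defs.C0 = Defs.C0 by cx.
exact: scal0. Qed.
Lemma starN (x : W) : vstar (vopp x) = vopp (vstar x).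
Proof. rewrite !oppE starZ; congr vscal; cx. Qed.
Lemma scalR1 (x : W) : vscal (RtoC 1) x = x.
Proof. rewrite -{2}(scal1 x); congr vscal. Qed.

Lemma subE (x y : W) : vsub x y = vadd x (vopp y). Proof. by []. Qed.
Lemma subDD (a b c d : W) : vsub (vadd a b) (vadd c d) = vadd (vsub a c) (vsub b d).
Proof.
rewrite /vsub oppD -!addA; congr vadd; rewrite !addA; congr vadd; exact: addC.
Qed.
Lemma subNN (a b : W) : vsub (vopp a) (vopp b) = vopp (vsub a b).
Proof. by rewrite /vsub oppD. Qed.
Lemma subZZ c (a b : W) : vsub (vscal c a) (vscal c b) = vscal c (vsub a b).
Proof. by rewrite /vsub scalDr scalN. Qed.
Lemma subSS (a b : W) : vsub (vstar a) (vstar b) = vstar (vsub a b).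
Proof. by rewrite /vsub starD starN. Qed.
Lemma subxx (a : W) : vsub a a = vzero.
Proof. exact: addNr. Qed.
Lemma subx0 (a : W) : vsub a vzero = a.
Proof. by rewrite /vsub opp0 addr0. Qed.
Lemma sub0x (a : W) : vsub vzero a = vopp a.
Proof. by rewrite /vsub add0. Qed.
Lemma subK (a b : W) : vsub a (vsub a b) = b.
Proof. by rewrite /vsub oppD oppK addA addNr add0. Qed.
Lemma subN (a b : W) : vopp (vsub a b) = vsub b a.
Proof. by rewrite /vsub oppD oppK addC. Qed.
Lemma subtr (a b c : W) : vsub a c = vadd (vsub a b) (vsub b c).
Proof. by rewrite /vsub addA -(addA a) addNl addr0. Qed.

HB.instance Definition _ := Monoid.isComLaw.Build (car W) vzero (@vadd W) addA addC add0.

Lemma sum_scal a n (F : 'I_n -> W) :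
  vscal a (\big[vadd/vzero]_(i < n) F i) = \big[vadd/vzero]_(i < n) vscal a (F i).
Proof. apply: (big_morph (vscal a)); [exact: scalDr | exact: scalz]. Qed.
Lemma sum_star n (F : 'I_n -> W) :
  vstar (\big[vadd/vzero]_(i < n) F i) = \big[vadd/vzero]_(i < n) vstar (F i).
Proof. apply: (big_morph vstar); [exact: starD | exact: star0]. Qed.
Lemma sum_opp n (F : 'I_n -> W) :
  vopp (\big[vadd/vzero]_(i < n) F i) = \big[vadd/vzero]_(i < n) vopp (F i).
Proof. apply: (big_morph vopp); [exact: oppD | exact: opp0]. Qed.

Lemma sum_one n (i : 'I_n) (F : 'I_n -> W) :
  (forall k, k != i -> F k = vzero) -> \big[vadd/vzero]_(k < n) F k = F i.
Proof.
move=> h; rewrite (bigD1 i) //= big1 ?addr0 // => k /h //.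
Qed.

Lemma sum_two n (i j : 'I_n) (F : 'I_n -> W) : i != j ->
  (forall k, k != i -> k != j -> F k = vzero) ->
  \big[vadd/vzero]_(k < n) F k = vadd (F i) (F j).
Proof.
move=> ij h; rewrite (bigD1 i) //= (bigD1 j) /=; last by rewrite eq_sym.
rewrite big1 ?addr0 // => k /andP [ki kj]; exact: h.
Qed.

Lemma compress_selfadj n k (X : 'I_n -> 'I_k -> Cx) (A : Mat W n n) :
  selfadj A -> selfadj (compress X A).
Proof.
move=> hA p q; rewrite /compress sum_star exchange_big /=.
apply: eq_bigr => i _; rewrite sum_star; apply: eq_bigr => j _.
rewrite starZ -hA; congr vscal; cx.
Qed.

Lemma compress_opp n k (X : 'I_n -> 'I_k -> Cx) (A : Mat W n n) :
  compress X (mopp A) = mopp (compress X A).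
Proof.
apply: functional_extensionality => p; apply: functional_extensionality => q.
rewrite /compress /mopp sum_opp; apply: eq_bigr => i _; rewrite sum_opp;
apply: eq_bigr => j _; by rewrite scalN.
Qed.



Lemma compress_emb N n (f : 'I_n -> 'I_N) (C : Mat W N N) p q :
  compress (emb f) C p q = C (f p) (f q).
Proof.
rewrite /compress (sum_one (f p)); last first.
  move=> i hi; apply: big1 => j _; rewrite /emb (negbTE hi) Cconj0 Cmul0l.
  exact: scal0.
rewrite (sum_one (f q)); last first.
  move=> j hj; rewrite /emb (negbTE hj) Cmul0r; exact: scal0.
rewrite /emb !eqxx Cmul11; exact: scal1.
Qed.

Definition col n (x : 'I_n -> Cx) : 'I_n -> 'I_1 -> Cx := fun i _ => x i.
Definition cc n (x : 'I_n -> Cx) a b := Cmul (Cconj (x a)) (x b).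

Lemma compress_one n (x : 'I_n -> Cx) (i : 'I_n) (A : Mat W n n) p q :
  (forall k, k != i -> x k = Defs.C0) ->
  compress (col x) A p q = vscal (cc x i i) (A i i).
Proof.
move=> h; rewrite /compress (sum_one i); last first.
  move=> k hk; apply: big1 => j _; rewrite /col (h k hk) Cconj0 Cmul0l.
  exact: scal0.
rewrite (sum_one i) // => j hj; rewrite /col (h j hj) Cmul0r; exact: scal0.
Qed.

Lemma compress_two n (x : 'I_n -> Cx) (i j : 'I_n) (A : Mat W n n) p q :
  i != j ->
  (forall k, k != i -> k != j -> x k = Defs.C0) ->
  compress (col x) A p q =
  vadd (vadd (vscal (cc x i i) (A i i)) (vscal (cc x i j) (A i j)))
       (vadd (vscal (cc x j i) (A j i)) (vscal (cc x j j) (A j j))).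
Proof.
move=> ij h; rewrite /compress (sum_two i j _ ij); last first.
  move=> k hk hk'; apply: big1 => l _; rewrite /col (h k hk hk') Cconj0 Cmul0l.
  exact: scal0.
by rewrite !(sum_two i j _ ij) // => l hl hl'; rewrite /col (h l hl hl') Cmul0r; exact: scal0.
Qed.

End VS.


Lemma opnorm_le1 N n (X : 'I_N -> 'I_n -> Cx) :
  (forall v, cvnorm2 (cmatvec X v) <= cvnorm2 v) -> 0 <= opnorm X <= 1.
Proof.
move=> h.
set E := (fun t => exists v, cvnorm2 v <= 1 /\ t = sqrt (cvnorm2 (cmatvec X v))).
have hb : bound E.
  exists 1 => t [v [hv ->]]; rewrite -sqrt_1; apply: sqrt_le_1_alt.
  by apply: Rle_trans (h v) hv.
have hne : exists t, E t.
  exists (sqrt (cvnorm2 (cmatvec X (fun _ => Defs.C0)))).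
  exists (fun _ => Defs.C0); split => //.
  rewrite /cvnorm2 big1; [lra | move=> i _; rewrite /Cnorm2 /=; lra].
have [m hm] := @completeness E hb hne.
have hop : is_lub E (opnorm X).
  rewrite /opnorm; apply: (epsilon_spec (inhabits 0) (is_lub E)); by exists m.
case: hop => hup hle; split.
  case: hne => t ht; apply: Rle_trans (hup t ht).
  case: ht => v [_ ->]; exact: sqrt_pos.
apply: hle => t [v [hv ->]]; rewrite -sqrt_1; apply: sqrt_le_1_alt.
by apply: Rle_trans (h v) hv.
Qed.

Lemma opnorm_sq_le1 N n (X : 'I_N -> 'I_n -> Cx) :
  (forall v, cvnorm2 (cmatvec X v) <= cvnorm2 v) -> opnorm X ^ 2 <= 1.
Proof.
move=> /opnorm_le1 [h0 h1]. have := Rmult_le_compat _ _ _ _ h0 h0 h1 h1. simpl; lra.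
Qed.

Lemma Cnorm2_0 : Cnorm2 Defs.C0 = 0. Proof. rewrite /Cnorm2 /=; lra. Qed.

Lemma emb_l_norm n k (v : 'I_n -> Cx) :
  cvnorm2 (cmatvec (emb (@lshift n k)) v) <= cvnorm2 v.
Proof.
rewrite /cvnorm2 big_split_ord /= [X in _ + X]big1 ?Rplus_0_r.
  apply: Req_le; apply: eq_bigr => p _; congr Cnorm2.
  rewrite /cmatvec (bigD1 p) //= big1.
    rewrite /emb eqxx; apply: Ceq; rewrite /= ; lra.
  move=> j hj; rewrite /emb eq_lshift eq_sym (negbTE hj); apply: Ceq; rewrite /=; lra.
move=> i _; rewrite /cmatvec big1 ?Cnorm2_0 // => j _; rewrite /emb eq_rlshift.
apply: Ceq; rewrite /=; lra.
Qed.

Lemma emb_r_norm n k (v : 'I_k -> Cx) :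
  cvnorm2 (cmatvec (emb (@rshift n k)) v) <= cvnorm2 v.
Proof.
rewrite /cvnorm2 big_split_ord /= big1 ?Rplus_0_l.
  apply: Req_le; apply: eq_bigr => p _; congr Cnorm2.
  rewrite /cmatvec (bigD1 p) //= big1.
    rewrite /emb eqxx; apply: Ceq; rewrite /= ; lra.
  move=> j hj; rewrite /emb eq_rshift eq_sym (negbTE hj); apply: Ceq; rewrite /=; lra.
move=> i _; rewrite /cmatvec big1 ?Cnorm2_0 // => j _; rewrite /emb eq_lrshift.
apply: Ceq; rewrite /=; lra.
Qed.


Section Quot.
Variable V : StarOps.
Variable S : V -> Prop.
Hypothesis HV : is_star_vspace V.
Hypothesis HS : is_subspace V S.
Hypothesis Hst : forall x, S x -> S (vstar x).

Lemma S0 : S vzero. Proof. by case: HS. Qed.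
Lemma SD x y : S x -> S y -> S (vadd x y). Proof. case: HS => _ [h _]; exact: h. Qed.
Lemma SZ a x : S x -> S (vscal a x). Proof. case: HS => _ [_ h]; exact: h. Qed.
Lemma SN x : S x -> S (vopp x). Proof. rewrite (oppE HV); exact: SZ. Qed.
Lemma Ssub x y : S x -> S y -> S (vsub x y). Proof. move=> hx hy; apply: SD hx (SN hy). Qed.

Lemma coset_eq a b : coset S a = coset S b <-> S (vsub a b).
Proof.
split.
  move=> e; have : coset S b b by rewrite /coset (subxx HV); exact: S0.
  by rewrite -e.
move=> h; apply: functional_extensionality => y; apply: propositional_extensionality.
rewrite /coset; split => hy.
  rewrite (subtr HV b a y) -(subN HV); apply: SD hy; exact: SN.
rewrite (subtr HV a b y); exact: SD.
Qed.

Lemma cls_eq a b : cls S a = cls S b <-> S (vsub a b).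
Proof.
split.
  by move=> /(f_equal (@proj1_sig _ _)) /= /coset_eq.
move=> /coset_eq e; apply: (@eq_sig _ _ (cls S a) (cls S b) e); apply: proof_irrelevance.
Qed.

Lemma rep_spec (p : Qcar S) : cls S (rep p) = p.
Proof.
have e : coset S (rep p) = proj1_sig p.
  rewrite /rep; case: (constructive_indefinite_description _ _) => x /= ->. done.
apply: (@eq_sig _ _ (cls S (rep p)) p e); apply: proof_irrelevance.
Qed.

Lemma rep_cls x : S (vsub (rep (cls S x)) x).
Proof. apply/cls_eq; exact: rep_spec. Qed.

Lemma Qind (P : Qcar S -> Prop) : (forall x, P (cls S x)) -> forall p, P p.
Proof. move=> h p; rewrite -(rep_spec p); exact: h. Qed.

Notation Q := (QuotOps V S).

Lemma cls_add x y : @vadd Q (cls S x) (cls S y) = cls S (vadd x y).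
Proof. apply/cls_eq; rewrite (subDD HV); apply: SD; exact: rep_cls. Qed.
Lemma cls_opp x : @vopp Q (cls S x) = cls S (vopp x).
Proof. apply/cls_eq; rewrite (subNN HV); apply: SN; exact: rep_cls. Qed.
Lemma cls_scal a x : @vscal Q a (cls S x) = cls S (vscal a x).
Proof. apply/cls_eq; rewrite (subZZ HV); apply: SZ; exact: rep_cls. Qed.
Lemma cls_star x : @vstar Q (cls S x) = cls S (vstar x).
Proof. apply/cls_eq; rewrite (subSS HV); apply: Hst; exact: rep_cls. Qed.
Lemma cls_zero : @vzero Q = cls S vzero.
Proof. by []. Qed.

Lemma HQ : is_star_vspace Q.
Proof.
split; [|split; [|split; [|split; [|split; [|split; [|split; [|split; [|split; [|split]]]]]]]]].
- by elim/Qind => x; elim/Qind => y; elim/Qind => z; rewrite !cls_add (addA HV).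
- by elim/Qind => x; elim/Qind => y; rewrite !cls_add (addC HV).
- by elim/Qind => x; rewrite cls_zero cls_add (add0 HV).
- by elim/Qind => x; rewrite cls_opp cls_add (addNl HV).
- by elim/Qind => x; rewrite cls_scal (scal1 HV).
- by move=> a b; elim/Qind => x; rewrite !cls_scal (scalM HV).
- by move=> a; elim/Qind => x; elim/Qind => y; rewrite !(cls_scal, cls_add) (scalDr HV).
- by move=> a b; elim/Qind => x; rewrite !(cls_scal, cls_add) (scalDl HV).
- by elim/Qind => x; elim/Qind => y; rewrite !(cls_star, cls_add) (starD HV).
- by move=> a; elim/Qind => x; rewrite !(cls_scal, cls_star) (starZ HV).
- by elim/Qind => x; rewrite !cls_star (starK HV).
Qed.

Lemma cls_kernel x : S x <-> cls S x = @vzero Q.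
Proof. rewrite cls_zero cls_eq (subx0 HV). done. Qed.

Lemma cls_linear : is_linear_star (quotmap V S).
Proof.
split; [|split] => *; rewrite /quotmap; by rewrite ?cls_add ?cls_scal ?cls_star.
Qed.

End Quot.

Lemma le_eps x y : (forall e, 0 < e -> x <= y + e) -> x <= y.
Proof.
move=> h; apply: Rnot_lt_le => hl; have := h ((x - y)/2) ltac:(lra); lra.
Qed.

Lemma un_cv_small (u : nat -> R) : (forall j, 0 <= u j < / INR (S j)) -> Un_cv u 0.
Proof.
move=> h e he; have [N [hN hN0]] := archimed_cor1 e he; exists N => n hn.
rewrite /R_dist Rminus_0_r Rabs_pos_eq; last by case: (h n).
case: (h n) => _ h1; apply: Rlt_le_trans h1 _; apply: Rle_trans (Rlt_le _ _ hN).
apply: Rinv_le_contravar; first by apply: lt_0_INR; lia.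
apply: le_INR; lia.
Qed.

Unset Implicit Arguments.
Section Gauge.
Variable V : StarOps.
Variable nu : forall n, Mat V n n -> R.
Variable S : V -> Prop.
Hypothesis HL : is_LinfMOS V nu.
Hypothesis HS : is_subspace V S.
Hypothesis Hst : forall x, S x -> S (vstar x).
Set Implicit Arguments.

Lemma HV : is_star_vspace V. Proof. by case: HL. Qed.
Lemma nu_ge0 n (A : Mat V n n) : selfadj A -> 0 <= nu n A.
Proof. case: HL => _ [h _] hA; case: (h n) => h0 _; exact: h0. Qed.
Lemma nu_add n (A B : Mat V n n) : selfadj A -> selfadj B -> nu n (madd A B) <= nu n A + nu n B.
Proof. case: HL => _ [h _] hA hB; case: (h n) => _ [h1 _]; exact: h1. Qed.
Lemma nu_scal n t (A : Mat V n n) : selfadj A -> 0 < t -> nu n (mrscal t A) = t * nu n A.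
Proof. case: HL => _ [h _] hA ht; case: (h n) => _ [_ [h1 _]]; exact: h1. Qed.
Lemma nu_comp n k (X : 'I_n -> 'I_k -> Cx) (A : Mat V n n) : selfadj A ->
  nu k (compress X A) <= (opnorm X) ^ 2 * nu n A.
Proof. case: HL => _ [_ [h _]]; exact: h. Qed.
Lemma nu_dsum n k (A : Mat V n n) (B : Mat V k k) : selfadj A -> selfadj B ->
  nu (n + k)%nat (dsum A B) = Rmax (nu n A) (nu k B).
Proof. case: HL => _ [_ [_ h]]; exact: h. Qed.

Notation Q := (QuotOps V S).
Notation q := (qgauge V nu S).
Notation pi := (quotmap V S).

Definition lifts n (A : Mat Q n n) (B : Mat V n n) := selfadj B /\ mapn pi B = A.
Arguments lifts {n}.

Lemma qspec n (A : Mat Q n n) : (exists B, lifts A B) ->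
  is_glb (fun r => exists B : Mat V n n, selfadj B /\ mapn pi B = A /\ r = nu n B) (q n A).
Proof.
move=> [B0 [h0 e0]].
set E := (fun r => exists B : Mat V n n, selfadj B /\ mapn pi B = A /\ r = nu n B).
set E' := (fun t => E (- t)).
have hb : bound E'.
  exists 0 => t [B [hB [_ e]]]; have := nu_ge0 hB; lra.
have hne : exists t, E' t.
  exists (- nu n B0); exists B0; split => //; split => //; lra.
have [m [hm1 hm2]] := @completeness E' hb hne.
have hg : is_glb E (- m).
  split.
    move=> t ht; have : E' (- t) by rewrite /E' Ropp_involutive.
    move=> /hm1; lra.
  move=> s hs; have : m <= - s.
    apply: hm2 => t ht; have := hs _ ht; lra.
  lra.
rewrite /qgauge; apply: (epsilon_spec (inhabits 0) (is_glb E)); by exists (- m).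
Qed.

Lemma q_le n (A : Mat Q n n) B : lifts A B -> q n A <= nu n B.
Proof.
move=> hl; case: (qspec (ex_intro _ B hl)) => h _; apply: h; exists B.
by case: hl => ? ?; split => //; split.
Qed.

Lemma q_ge n (A : Mat Q n n) r : (exists B, lifts A B) ->
  (forall B, lifts A B -> r <= nu n B) -> r <= q n A.
Proof.
move=> he h; case: (qspec he) => _ h2; apply: h2 => t [B [hB [eB ->]]]; exact: h.
Qed.

Lemma q_approx n (A : Mat Q n n) e : (exists B, lifts A B) -> 0 < e ->
  exists B, lifts A B /\ nu n B < q n A + e.
Proof.
move=> he he0; apply: NNPP => hn.
have : q n A + e <= q n A.
  apply: q_ge => // B hB; apply: Rnot_lt_le => hlt; apply: hn; by exists B.
lra.
Qed.

Lemma q_ge0 n (A : Mat Q n n) : (exists B, lifts A B) -> 0 <= q n A.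
Proof. move=> he; apply: q_ge => // B [hB _]; exact: nu_ge0. Qed.

Lemma mat_ext (W : StarOps) n m (A B : Mat W n m) : (forall i j, A i j = B i j) -> A = B.
Proof. move=> h; do 2 apply: functional_extensionality => ?; exact: h. Qed.

Lemma mapn_add n (A B : Mat V n n) : mapn pi (madd A B) = madd (mapn pi A) (mapn pi B).
Proof. apply: mat_ext => i j; rewrite /mapn /madd /quotmap cls_add //; exact: HV. Qed.
Lemma mapn_opp n (A : Mat V n n) : mapn pi (mopp A) = mopp (mapn pi A).
Proof. apply: mat_ext => i j; rewrite /mapn /mopp /quotmap cls_opp //; exact: HV. Qed.
Lemma mapn_scal n t (A : Mat V n n) : mapn pi (mrscal t A) = mrscal t (mapn pi A).
Proof. apply: mat_ext => i j; rewrite /mapn /mrscal /quotmap cls_scal //; exact: HV. Qed.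
Lemma mapn_dsum n k (A : Mat V n n) (B : Mat V k k) :
  mapn pi (dsum A B) = dsum (mapn pi A) (mapn pi B).
Proof. apply: mat_ext => i j; rewrite /mapn /dsum; by case: (fintype.split i); case: (fintype.split j). Qed.
Lemma mapn_comp n k (X : 'I_n -> 'I_k -> Cx) (A : Mat V n n) :
  mapn pi (compress X A) = compress X (mapn pi A).
Proof.
apply: mat_ext => p r; rewrite /mapn /compress.
rewrite (big_morph pi (id1 := @vzero Q) (op1 := @vadd Q)); last 2 first.
- move=> x y; rewrite /quotmap cls_add //; exact: HV.
- by [].
apply: eq_bigr => i _.
rewrite (big_morph pi (id1 := @vzero Q) (op1 := @vadd Q)); last 2 first.
- move=> x y; rewrite /quotmap cls_add //; exact: HV.
- by [].
apply: eq_bigr => j _; rewrite /quotmap cls_scal //; exact: HV.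
Qed.


Lemma selfadj_add (W : StarOps) (HW : is_star_vspace W) n (A B : Mat W n n) :
  selfadj A -> selfadj B -> selfadj (madd A B).
Proof. move=> hA hB i j; by rewrite /madd (starD HW) -hA -hB. Qed.
Lemma selfadj_opp (W : StarOps) (HW : is_star_vspace W) n (A : Mat W n n) :
  selfadj A -> selfadj (mopp A).
Proof. move=> hA i j; by rewrite /mopp (starN HW) -hA. Qed.
Lemma selfadj_scal (W : StarOps) (HW : is_star_vspace W) n t (A : Mat W n n) :
  selfadj A -> selfadj (mrscal t A).
Proof.
move=> hA i j; rewrite /mrscal (starZ HW) -hA; congr vscal; cx.
Qed.
Lemma selfadj_dsum (W : StarOps) (HW : is_star_vspace W) n k (A : Mat W n n) (B : Mat W k k) :
  selfadj A -> selfadj B -> selfadj (dsum A B).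
Proof.
move=> hA hB i j; rewrite /dsum.
case: (fintype.split i) => a; case: (fintype.split j) => b //; by rewrite ?(star0 HW).
Qed.
Lemma half (W : StarOps) (HW : is_star_vspace W) (a : W) :
  vscal (RtoC (/2)) (vadd a a) = a.
Proof.
rewrite -{1 2}(scal1 HW a) -(scalDl HW) (scalM HW) -{2}(scal1 HW a); congr vscal.
apply: Ceq; rewrite /=; field.
Qed.
Lemma scal_inv (W : StarOps) (HW : is_star_vspace W) n t (A : Mat W n n) :
  0 < t -> mrscal (/ t) (mrscal t A) = A.
Proof.
move=> ht; apply: mat_ext => i j; rewrite /mrscal (scalM HW) -{2}(scal1 HW (A i j)).
congr vscal; apply: Ceq; rewrite /=; field; lra.
Qed.

Lemma lift_exists n (A : Mat Q n n) : selfadj A -> exists B, lifts A B.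
Proof.
move=> hA.
exists (fun i j => vscal (RtoC (/2)) (vadd (rep (A i j)) (vstar (rep (A j i))))); split.
  move=> i j; rewrite (starZ HV) (starD HV) (starK HV) (addC HV); congr vscal; cx.
apply: mat_ext => i j; rewrite /mapn /quotmap -(cls_scal HV HS).
rewrite -(cls_add HV HS).
rewrite rep_spec.
change (cls S (vstar (rep (A j i)))) with (@vstar Q (A j i)).
rewrite -hA; apply: half; exact: HQ HV HS Hst.
Qed.

Lemma HQ' : is_star_vspace Q. Proof. exact: HQ HV HS Hst. Qed.

Lemma q_nonneg n (A : Mat Q n n) : selfadj A -> 0 <= q n A.
Proof. move=> /lift_exists; exact: q_ge0. Qed.

Lemma q_add n (A B : Mat Q n n) : selfadj A -> selfadj B ->
  q n (madd A B) <= q n A + q n B.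
Proof.
move=> /lift_exists hA /lift_exists hB.
have hAB : exists C, lifts (madd A B) C.
  case: hA => B1 [h1 e1]; case: hB => B2 [h2 e2]; exists (madd B1 B2); split.
    exact: (selfadj_add HV h1 h2).
  by rewrite mapn_add e1 e2.
suff : q n (madd A B) - q n B <= q n A by lra.
apply: q_ge => // B1 [h1 e1].
suff : q n (madd A B) - nu n B1 <= q n B by lra.
apply: q_ge => // B2 [h2 e2].
have : q n (madd A B) <= nu n (madd B1 B2).
  apply: q_le; split; first exact: (selfadj_add HV h1 h2).
  by rewrite mapn_add e1 e2.
have := nu_add h1 h2; lra.
Qed.

Lemma q_scal n t (A : Mat Q n n) : selfadj A -> 0 < t ->
  q n (mrscal t A) = t * q n A.
Proof.
move=> hA ht; have [B0 [h0 e0]] := lift_exists hA.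
have hl : forall B, lifts A B -> lifts (mrscal t A) (mrscal t B).
  move=> B [hB eB]; split; first exact: (@selfadj_scal _ HV _ t _ hB).
  by rewrite mapn_scal eB.
apply: Rle_antisym.
  suff : q n (mrscal t A) / t <= q n A.
    move=> h; have := Rmult_le_compat_l t _ _ (Rlt_le _ _ ht) h.
    by rewrite /Rdiv -Rmult_assoc (Rmult_comm t) Rmult_assoc Rinv_r ?Rmult_1_r; lra.
  apply: q_ge; first by exists B0.
  move=> B hB; have := q_le (hl B hB); rewrite nu_scal //; last by case: hB.
  move=> h; apply: (Rmult_le_reg_l t) => //.
  rewrite /Rdiv (Rmult_comm _ (/ t)) -Rmult_assoc Rinv_r ?Rmult_1_l; lra.
apply: q_ge; first by exists (mrscal t B0); apply: hl.
move=> B' [hB' eB'].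
have hl' : lifts A (mrscal (/ t) B').
  split; first exact: (@selfadj_scal _ HV _ (/ t) _ hB').
  rewrite mapn_scal eB'; apply: scal_inv => //; exact: HQ'.
have := q_le hl'; rewrite nu_scal //; last by apply: Rinv_0_lt_compat.
move=> h; have := Rmult_le_compat_l t _ _ (Rlt_le _ _ ht) h.
by rewrite -Rmult_assoc Rinv_r ?Rmult_1_l; lra.
Qed.

Lemma q_comp n k (X : 'I_n -> 'I_k -> Cx) (A : Mat Q n n) : selfadj A ->
  q k (compress X A) <= (opnorm X) ^ 2 * q n A.
Proof.
move=> hA; have [B0 [h0 e0]] := lift_exists hA.
have hl : forall B, lifts A B -> lifts (compress X A) (compress X B).
  move=> B [hB eB]; split; first exact: (compress_selfadj HV X hB).
  by rewrite mapn_comp eB.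
have key : forall B, lifts A B -> q k (compress X A) <= opnorm X ^ 2 * nu n B.
  move=> B hB; apply: Rle_trans (q_le (hl B hB)) _; apply: nu_comp; by case: hB.
have hc : 0 <= opnorm X ^ 2 by apply: pow2_ge_0.
case: (Rle_lt_or_eq_dec _ _ hc) => hc'; last first.
  have := key B0 (conj h0 e0); rewrite -hc'; lra.
suff : q k (compress X A) / opnorm X ^ 2 <= q n A.
  move=> h; have := Rmult_le_compat_l _ _ _ hc h.
  rewrite /Rdiv -Rmult_assoc (Rmult_comm (opnorm X ^ 2)) Rmult_assoc Rinv_r; lra.
apply: q_ge; first by exists B0.
move=> B hB; have := key B hB => h.
apply: (Rmult_le_reg_l (opnorm X ^ 2)) => //.
rewrite /Rdiv (Rmult_comm _ (/ _)) -Rmult_assoc Rinv_r; lra.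
Qed.

Lemma dsum_l (W : StarOps) n k (A : Mat W n n) (B : Mat W k k) p r :
  dsum A B (lshift k p) (lshift k r) = A p r.
Proof.
rewrite /dsum.
have -> : fintype.split (lshift k p) = inl p := unsplitK (inl _ p).
by have -> : fintype.split (lshift k r) = inl r := unsplitK (inl _ r).
Qed.
Lemma dsum_r (W : StarOps) n k (A : Mat W n n) (B : Mat W k k) p r :
  dsum A B (rshift n p) (rshift n r) = B p r.
Proof.
rewrite /dsum.
have -> : fintype.split (rshift n p) = inr p := unsplitK (inr _ p).
by have -> : fintype.split (rshift n r) = inr r := unsplitK (inr _ r).
Qed.

Lemma q_dsum n k (A : Mat Q n n) (B : Mat Q k k) : selfadj A -> selfadj B ->
  q (n + k)%nat (dsum A B) = Rmax (q n A) (q k B).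
Proof.
move=> hA hB; have hA' := lift_exists hA; have hB' := lift_exists hB.
have hl : forall B1 B2, lifts A B1 -> lifts B B2 -> lifts (dsum A B) (dsum B1 B2).
  move=> B1 B2 [h1 e1] [h2 e2]; split; first exact: (selfadj_dsum HV h1 h2).
  by rewrite mapn_dsum e1 e2.
apply: Rle_antisym.
  apply: le_eps => e he.
  have [B1 [hl1 hn1]] := q_approx hA' he.
  have [B2 [hl2 hn2]] := q_approx hB' he.
  apply: Rle_trans (q_le (hl _ _ hl1 hl2)) _.
  rewrite nu_dsum; [|by case: hl1|by case: hl2].
  have := Rmax_l (q n A) (q k B); have := Rmax_r (q n A) (q k B) => *.
  apply: Rmax_lub; lra.
apply: q_ge.
  case: hA' => B1 hl1; case: hB' => B2 hl2; exists (dsum B1 B2); exact: hl.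
move=> C [hC eC]; have hC0 := nu_ge0 hC.
apply: Rmax_lub.
  have hl1 : lifts A (compress (emb (@lshift n k)) C).
    split; first exact: (compress_selfadj HV (emb _) hC).
    rewrite mapn_comp eC; apply: mat_ext => p r; rewrite (compress_emb HQ'); exact: dsum_l.
  apply: Rle_trans (q_le hl1) _; apply: Rle_trans (nu_comp _ hC) _.
  have := opnorm_sq_le1 (@emb_l_norm n k) => h1.
  have := Rmult_le_compat_r _ _ _ hC0 h1; lra.
have hl2 : lifts B (compress (emb (@rshift n k)) C).
  split; first exact: (compress_selfadj HV (emb _) hC).
  rewrite mapn_comp eC; apply: mat_ext => p r; rewrite (compress_emb HQ'); exact: dsum_r.
apply: Rle_trans (q_le hl2) _; apply: Rle_trans (nu_comp _ hC) _.
have := opnorm_sq_le1 (@emb_r_norm n k) => h1.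
have := Rmult_le_compat_r _ _ _ hC0 h1; lra.
Qed.



Lemma mat11 (W : StarOps) (M : Mat W 1 1) : M = fun _ _ => M ord0 ord0.
Proof. apply: mat_ext => i j; by rewrite (ord1 i) (ord1 j). Qed.

Hypothesis Hgi : is_gauge_ideal Vsa (nu1 nu) (fun x => S x /\ Vsa x).

Lemma inv_pos j : 0 < / INR j.+1.
Proof. apply: Rinv_0_lt_compat; apply: lt_0_INR; lia. Qed.

Lemma qdef1 (A : Mat Q 1 1) : selfadj A -> q 1 A = 0 -> q 1 (mopp A) = 0 ->
  A = fun _ _ => vzero.
Proof.
move=> hA hq hq'.
have HV' := HV.
have [B0 [h0 e0]] := lift_exists hA.
set x := B0 ord0 ord0.
have hx : Vsa x := h0 ord0 ord0.
have hAx : A ord0 ord0 = cls S x by rewrite -e0.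
have hmA : selfadj (mopp A) := selfadj_opp HQ' hA.
have ex1 : forall j, exists B, lifts A B /\ nu 1 B < / INR j.+1.
  move=> j; have := q_approx (lift_exists hA) (inv_pos j); by rewrite hq Rplus_0_l.
have ex2 : forall j, exists B, lifts (mopp A) B /\ nu 1 B < / INR j.+1.
  move=> j; have := q_approx (lift_exists hmA) (inv_pos j); by rewrite hq' Rplus_0_l.
have [fB hfB] : exists f : nat -> Mat V 1 1, forall j, lifts A (f j) /\ nu 1 (f j) < / INR j.+1.
  exists (fun j => proj1_sig (constructive_indefinite_description _ (ex1 j))) => j.
  exact: proj2_sig (constructive_indefinite_description _ (ex1 j)).
have [fC hfC] : exists f : nat -> Mat V 1 1, forall j, lifts (mopp A) (f j) /\ nu 1 (f j) < / INR j.+1.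
  exists (fun j => proj1_sig (constructive_indefinite_description _ (ex2 j))) => j.
  exact: proj2_sig (constructive_indefinite_description _ (ex2 j)).
pose a j := vsub x (fB j ord0 ord0).
pose b j := vadd (fC j ord0 ord0) x.
have hSx : S x /\ Vsa x.
  apply: (Hgi hx a b).
  - move=> j; case: (hfB j) => [[hB eB] _]; rewrite /a; split.
      have : cls S (fB j ord0 ord0) = cls S x by rewrite -hAx -eB.
      move/(cls_eq HV HS) => h; rewrite -(subN HV); exact: SN.
    by rewrite /Vsa -(subSS HV) -hx -(hB ord0 ord0).
  - move=> j; case: (hfC j) => [[hC eC] _]; rewrite /b; split.
      have : cls S (fC j ord0 ord0) = cls S (vopp x).
        rewrite -(cls_opp HV HS) -hAx.
        change (@vopp Q (A ord0 ord0)) with (mopp A ord0 ord0); by rewrite -eC.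
      by move/(cls_eq HV HS); rewrite /vsub (oppK HV).
    by rewrite /Vsa (starD HV) -hx -(hC ord0 ord0).
  - apply: un_cv_small => j; case: (hfB j) => [[hB eB] hn].
    rewrite /nu1 /a (subK HV) -(@mat11 _ (fB j)); split => //; exact: nu_ge0.
  - apply: un_cv_small => j; case: (hfC j) => [[hC eC] hn].
    have -> : vsub (b j) x = fC j ord0 ord0.
      by rewrite /b /vsub -(addA HV) (addNr HV) (addr0 HV).
    rewrite /nu1 -(@mat11 _ (fC j)); split => //; exact: nu_ge0.
apply: mat_ext => i j; rewrite (ord1 i) (ord1 j) hAx; apply/(cls_eq HV HS).
rewrite (subx0 HV); by case: hSx.
Qed.

Lemma qdef n (A : Mat Q n n) : selfadj A -> q n A = 0 -> q n (mopp A) = 0 ->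
  A = fun _ _ => vzero.
Proof.
move=> hA hq hq'.
have hc : forall x : 'I_n -> Cx, compress (col x) A ord0 ord0 = vzero.
  move=> x; set Y := compress (col x) A.
  have hY : selfadj Y := compress_selfadj HQ' (col x) hA.
  have hq1 : q 1 Y = 0.
    apply: Rle_antisym; last exact: q_nonneg.
    have := q_comp (col x) hA; rewrite hq Rmult_0_r; done.
  have hq2 : q 1 (mopp Y) = 0.
    apply: Rle_antisym; last exact: q_nonneg (selfadj_opp HQ' hY).
    rewrite /Y -(compress_opp HQ').
    have := q_comp (col x) (selfadj_opp HQ' hA); rewrite hq' Rmult_0_r; done.
  by rewrite (qdef1 hY hq1 hq2).
have hd : forall i, A i i = vzero.
  move=> i; have := hc (fun k => if k == i then Defs.C1 else Defs.C0).
  rewrite (compress_one HQ' _ i); last by move=> k /negbTE ->.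
  rewrite /cc; cbv beta; by rewrite eqxx Cmul11 (scal1 HQ').
apply: mat_ext => i j; case: (eqVneq i j) => [-> | ij]; first exact: hd.
have ji : j != i by rewrite eq_sym.
have e1 := hc (fun k => if k == i then Defs.C1 else if k == j then Defs.C1 else Defs.C0).
rewrite (compress_two HQ' _ i j _ _ _ ij) in e1; last by move=> k /negbTE -> /negbTE ->.
rewrite /cc in e1; cbv beta in e1; rewrite eqxx (negbTE ji) eqxx Cmul11 !(scal1 HQ') !hd (add0 HQ') (addr0 HQ') in e1.
have e2 := hc (fun k => if k == i then Defs.C1 else if k == j then Cmk 0 1 else Defs.C0).
rewrite (compress_two HQ' _ i j _ _ _ ij) in e2; last by move=> k /negbTE -> /negbTE ->.
rewrite /cc in e2; cbv beta in e2; rewrite eqxx (negbTE ji) eqxx !hd !(scalz HQ') (add0 HQ') (addr0 HQ') in e2.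
have eji : A j i = vopp (A i j) by apply: (oppU HQ'); rewrite (addC HQ').
rewrite eji (oppE HQ') (scalM HQ') -(scalDl HQ') in e2.
rewrite -(scal1 HQ' (A i j)).
have -> : Defs.C1 = Cmul (Cmk 0 (- / 2)) (Cadd (Cmul (Cconj Defs.C1) (Cmk 0 1))
                 (Cmul (Cmul (Cconj (Cmk 0 1)) Defs.C1) (RtoC (-1)))).
  apply: Ceq; rewrite /=; field.
by rewrite -(scalM HQ') e2 (scalz HQ').
Qed.

Lemma HQL : is_LinfMOS Q q.
Proof.
split; first exact: HQ'.
split.
  move=> n; split; first by move=> A hA; exact: q_nonneg.
  split; first by move=> A B hA hB; exact: q_add.
  split; first by move=> t A hA ht; exact: q_scal.
  move=> A hA h1 h2; exact: qdef.
split.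
  move=> n k X A hA; exact: q_comp.
move=> n k A B hA hB; exact: q_dsum.
Qed.

Lemma pi_contr : comp_gauge_contractive V nu Q q pi.
Proof.
split; first exact: cls_linear HV HS Hst.
move=> n A hA; apply: q_le; by split.
Qed.

End Gauge.

Lemma lin0 (V W : StarOps) (HV : is_star_vspace V) (HW : is_star_vspace W) (phi : V -> W) :
  is_linear_star phi -> phi vzero = vzero.
Proof.
case=> hadd _; have h := hadd vzero vzero; rewrite (add0 HV) in h.
by rewrite -{1}(addKl HW (phi vzero) (phi vzero)) -h (addNl HW).
Qed.

Lemma linN (V W : StarOps) (HV : is_star_vspace V) (HW : is_star_vspace W) (phi : V -> W) :
  is_linear_star phi -> forall x, phi (vopp x) = vopp (phi x).
Proof.
move=> hl x; apply: (oppU HW); case: (hl) => hadd _.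
by rewrite -hadd (addNl HV) (lin0 HV HW hl).
Qed.

Lemma linB (V W : StarOps) (HV : is_star_vspace V) (HW : is_star_vspace W) (phi : V -> W) :
  is_linear_star phi -> forall x y, phi (vsub x y) = vsub (phi x) (phi y).
Proof.
move=> hl x y; case: (hl) => hadd _; by rewrite /vsub hadd (linN HV HW hl).
Qed.

Lemma lim_le y C (u : nat -> R) : 0 < C -> (forall j, y <= C * u j) -> Un_cv u 0 -> y <= 0.
Proof.
move=> hC h hu; apply: Rnot_lt_le => hy.
have he : y / C > 0 by apply: Rdiv_lt_0_compat.
have [N hN] := hu _ he; have := hN N (le_n N); rewrite /R_dist Rminus_0_r => hab.
have := h N; have := Rle_abs (u N) => h1 h2.
have : C * u N < C * (y / C) by apply: Rmult_lt_compat_l => //; lra.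
rewrite /Rdiv (Rmult_comm y) -Rmult_assoc Rinv_r ?Rmult_1_l; lra.
Qed.

Theorem theorem3p20 (V : StarOps) (nu : forall n, Mat V n n -> R) (S : V -> Prop) :
  is_LinfMOS V nu -> is_subspace V S ->
  ((exists (W : StarOps) (om : forall n, Mat W n n -> R) (phi : V -> W),
       is_LinfMOS W om /\ comp_gauge_bounded V nu W om phi /\
       (forall x, S x <-> phi x = vzero))
    <-> is_MOS_ideal V nu S)
  /\
  (is_MOS_ideal V nu S ->
     is_LinfMOS (QuotOps V S) (qgauge V nu S) /\
     comp_gauge_contractive V nu (QuotOps V S) (qgauge V nu S) (quotmap V S) /\
     (forall x, S x <-> quotmap V S x = vzero)).
Proof.
move=> HL HS.
have HV' : is_star_vspace V by case: HL.
have part2 : is_MOS_ideal V nu S ->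
     is_LinfMOS (QuotOps V S) (qgauge V nu S) /\
     comp_gauge_contractive V nu (QuotOps V S) (qgauge V nu S) (quotmap V S) /\
     (forall x, S x <-> quotmap V S x = vzero).
  move=> [_ [hst hgi]]; split; first exact: (HQL HL HS hst hgi).
  split; first exact: (pi_contr HL HS hst).
  move=> x; exact: (cls_kernel HV' HS x).
split => //; split.
- move=> [W [om [phi [HLW [[hl [C [hC hbd]]] hker]]]]].
  have HW : is_star_vspace W by case: HLW.
  case: HLW => _ [hpg _]; case: (hpg 1%nat) => hom0 [_ [_ hdef]].
  split => //; split.
    move=> x /hker hx; apply/hker; case: (hl) => _ [_ hs]; by rewrite hs hx (star0 HW).
  move=> x hx a b ha hb cva cvb; split => //.
  apply/hker.
  have hsa : selfadj (fun _ _ : 'I_1 => phi x).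
    by move=> i j; case: (hl) => _ [_ hs]; rewrite -hs -hx.
  have hsub : forall y z : V, Vsa y -> Vsa z -> selfadj (fun _ _ : 'I_1 => vsub y z).
    move=> y z hy hz i j; by rewrite -(subSS HV') -hy -hz.
  have e1 : om 1%nat (fun _ _ => phi x) <= 0.
    apply: (lim_le hC _ cva) => j.
    have := hbd 1%nat (fun _ _ => vsub x (a j)) (hsub _ _ hx (proj2 (ha j))).
    rewrite /mapn (linB HV' HW hl) (proj1 (hker _) (proj1 (ha j))) (subx0 HW); done.
  have e2 : om 1%nat (mopp (fun _ _ => phi x)) <= 0.
    apply: (lim_le hC _ cvb) => j.
    have := hbd 1%nat (fun _ _ => vsub (b j) x) (hsub _ _ (proj2 (hb j)) hx).
    rewrite /mapn (linB HV' HW hl) (proj1 (hker _) (proj1 (hb j))) (sub0x HW); done.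
  have := hdef _ hsa (Rle_antisym _ _ e1 (hom0 _ hsa))
     (Rle_antisym _ _ e2 (hom0 _ (selfadj_opp HW hsa))).
  move=> e; exact: (f_equal (fun M => M ord0 ord0) e).
- move=> hI; have [h1 [h2 h3]] := part2 hI.
  exists (QuotOps V S), (qgauge V nu S), (quotmap V S); split => //; split => //.
  case: h2 => hl hc; split => //; exists 1; split; first lra.
  move=> n A hA; rewrite Rmult_1_l; exact: hc.
Qed.
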